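(* Let $p\ge 2$ be an integer and $0<\varphi<2\pi/p$. In the Poincaré disc model of the hyperbolic plane consider the ideal points $v_m=e^{2\pi i m/p}$ and $w_m=e^{i(\varphi+2\pi m/p)}$, $m\in\mathbb Z$ (indices mod $p$). Choose horocycles based at all these points so that the family of horocycles is invariant under the rotation $z\mapsto e^{2\pi i/p}z$ (i.e. the horocycle at $v_{m+1}$ is the rotated horocycle at $v_m$, and likewise for the $w_m$). Let $c=\lambda(v_0,v_1)$, $c'=\lambda(w_0,w_1)$, $a=\lambda(v_0,w_0)$ and $b=\lambda(w_0,v_1)$. Then $$cc'=a^2+2\cos(\pi/p)\,ab+b^2.$$
   Context: For two distinct ideal points $x,y$ with chosen horocycles $h_x,h_y$, the $\lambda$-length is $\lambda(x,y)=e^{\ell/2}$, where $\ell$ is the signed hyperbolic length of the segment of the geodesic joining $x$ and $y$ that lies between $h_x$ and $h_y$ ($\ell$ is negative when the horocycles overlap). Geometrically, $v_0,\dots,v_{p-1}$ are the vertices of an ideal equilateral $p$-gon centered at a $\mathbb Z_p$-orbifold point, with ideal triangles $v_m w_m v_{m+1}$ attached to its sides; $c$ and $c'$ are the $\lambda$-lengths of a side before and after the flip. *)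

(* Defs.v *)
(* concrete real numbers R; points of the plane as pairs R*R,
   identified with complex numbers x + i y.  Poincare disc model. *)
From Stdlib Require Import Reals ZArith.
Open Scope R_scope.

Definition pt := (R * R)%type.

Definition nrm2 (z : pt) : R := fst z * fst z + snd z * snd z.
Definition dist2 (z w : pt) : R :=
  (fst z - fst w) * (fst z - fst w) + (snd z - snd w) * (snd z - snd w).

Definition cis (t : R) : pt := (cos t, sin t).

Definition vpt (p : nat) (m : Z) : pt := cis (2 * PI * IZR m / INR p).
Definition wpt (p : nat) (phi : R) (m : Z) : pt :=
  cis (phi + 2 * PI * IZR m / INR p).

Definition rot (p : nat) (z : pt) : pt :=
  let t := 2 * PI / INR p in
  (cos t * fst z - sin t * snd z, sin t * fst z + cos t * snd z).

Definition in_disc (z : pt) : Prop := nrm2 z < 1.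

Definition arcosh (t : R) : R := ln (t + sqrt (t * t - 1)).
Definition hdist (z w : pt) : R :=
  arcosh (1 + 2 * dist2 z w / ((1 - nrm2 z) * (1 - nrm2 w))).

(* The horocycle based at the ideal point xi (|xi| = 1) with Euclidean
   radius r in (0,1): the Euclidean circle of radius r centred at (1-r) xi
   (internally tangent to the unit circle at xi), with xi removed. *)
Definition hcirc (xi : pt) (r : R) (z : pt) : Prop :=
  dist2 z ((1 - r) * fst xi, (1 - r) * snd xi) = r * r /\ z <> xi.
Definition hball (xi : pt) (r : R) (z : pt) : Prop :=
  dist2 z ((1 - r) * fst xi, (1 - r) * snd xi) < r * r.

Definition is_horocycle_at (xi : pt) (H : pt -> Prop) : Prop :=
  exists r, 0 < r < 1 /\ forall z, H z <-> hcirc xi r z.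

(* z lies on the hyperbolic geodesic joining the ideal points x and y:
   z is in the disc and on a generalized circle
   A|z|^2 - 2 Re(z conj c) + A = 0 (orthogonal to the unit circle)
   passing through x and y (i.e. Re(x conj c) = A = Re(y conj c)). *)
Definition on_geod (x y z : pt) : Prop :=
  in_disc z /\
  exists (A : R) (c : pt), (A <> 0 \/ c <> (0, 0)) /\
    fst x * fst c + snd x * snd c = A /\
    fst y * fst c + snd y * snd c = A /\
    A * nrm2 z - 2 * (fst z * fst c + snd z * snd c) + A = 0.

(* lam x Hx y Hy L : L is the lambda-length lambda(x,y) = e^{l/2} for the
   horocycles Hx (at x) and Hy (at y), where l is the signed hyperbolic
   length of the segment of the geodesic xy between Hx and Hy.  Px, Py are
   the points where the geodesic meets Hx, Hy; l = -d(Px,Py) when the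
   horocycles overlap (Px then lies inside the horoball of Hy), and
   l = d(Px,Py) otherwise. *)
Definition lam (x : pt) (Hx : pt -> Prop) (y : pt) (Hy : pt -> Prop)
  (L : R) : Prop :=
  exists rx ry Px Py,
    0 < rx < 1 /\ 0 < ry < 1 /\
    (forall z, Hx z <-> hcirc x rx z) /\ (forall z, Hy z <-> hcirc y ry z) /\
    on_geod x y Px /\ hcirc x rx Px /\
    on_geod x y Py /\ hcirc y ry Py /\
    (hball y ry Px -> L = exp (- hdist Px Py / 2)) /\
    (~ hball y ry Px -> L = exp (hdist Px Py / 2)).

(* Main.v *)
Require Import Defs.
From Stdlib Require Import Reals ZArith Lra.
Open Scope R_scope.

Definition dot (a b : pt) : R := fst a * fst b + snd a * snd b.
Definition fr (u z : pt) : pt :=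
  (fst u * fst z + snd u * snd z, fst u * snd z - snd u * fst z).
Definition cj (u : pt) : pt := (fst u, - snd u).

Lemma fr_nrm u z : nrm2 (fr u z) = nrm2 u * nrm2 z.
Proof. destruct u, z; unfold nrm2, fr; simpl; ring. Qed.
Lemma fr_dist u a b : dist2 (fr u a) (fr u b) = nrm2 u * dist2 a b.
Proof. destruct u, a, b; unfold dist2, nrm2, fr; simpl; ring. Qed.
Lemma fr_dot u a b : dot (fr u a) (fr u b) = nrm2 u * dot a b.
Proof. destruct u, a, b; unfold dot, nrm2, fr; simpl; ring. Qed.
Lemma fr_inv u z : nrm2 u = 1 -> fr (cj u) (fr u z) = z.
Proof. destruct u as [u1 u2], z as [z1 z2]; unfold nrm2, fr, cj; simpl; intro H.
  f_equal.
  - replace (u1 * (u1 * z1 + u2 * z2) + - u2 * (u1 * z2 - u2 * z1)) with ((u1*u1+u2*u2)*z1) by ring. rewrite H; ring.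
  - replace (u1 * (u1 * z2 - u2 * z1) - - u2 * (u1 * z1 + u2 * z2)) with ((u1*u1+u2*u2)*z2) by ring. rewrite H; ring.
Qed.
Lemma cj_nrm u : nrm2 (cj u) = nrm2 u.
Proof. destruct u; unfold nrm2, cj; simpl; ring. Qed.
Lemma fr_self u : nrm2 u = 1 -> fr u u = (1, 0).
Proof. destruct u as [u1 u2]; unfold nrm2, fr; simpl; intro H. f_equal; [exact H| ring]. Qed.
Lemma fr_cj_x0 u : fr (cj u) (1, 0) = u.
Proof. destruct u as [u1 u2]; unfold fr, cj; simpl. f_equal; ring. Qed.
Lemma fr_scale u s a : fr u (s * fst a, s * snd a) = (s * fst (fr u a), s * snd (fr u a)).
Proof. destruct u, a; unfold fr; simpl; f_equal; ring. Qed.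

Lemma dist2_eq0 a b : dist2 a b = 0 -> a = b.
Proof. destruct a as [a1 a2], b as [b1 b2]; unfold dist2; simpl; intro H.
  pose proof (Rle_0_sqr (a1-b1)) as S1; pose proof (Rle_0_sqr (a2-b2)) as S2; unfold Rsqr in *.
  assert ((a1-b1)*(a1-b1) = 0) by lra. assert ((a2-b2)*(a2-b2)=0) by lra.
  apply Rsqr_0_uniq in H0. apply Rsqr_0_uniq in H1. f_equal; lra. Qed.
Lemma dist2_ge0 a b : 0 <= dist2 a b.
Proof. unfold dist2. pose proof (Rle_0_sqr (fst a - fst b)); pose proof (Rle_0_sqr (snd a - snd b)); unfold Rsqr in *; lra. Qed.
Lemma nrm2_eq0 a : nrm2 a = 0 -> a = (0,0).
Proof. destruct a as [a1 a2]; unfold nrm2; simpl; intro H.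
  pose proof (Rle_0_sqr a1) as S1; pose proof (Rle_0_sqr a2) as S2; unfold Rsqr in *.
  assert (a1*a1 = 0) by lra. assert (a2*a2=0) by lra.
  f_equal; [apply (Rsqr_0_uniq a1)|apply (Rsqr_0_uniq a2)]; unfold Rsqr; auto. Qed.

Lemma fr_inj u a b : nrm2 u = 1 -> fr u a = fr u b -> a = b.
Proof. intros Hu H. rewrite <- (fr_inv u a Hu), <- (fr_inv u b Hu), H. reflexivity. Qed.

Lemma T_geod u a b z : nrm2 u = 1 -> on_geod a b z -> on_geod (fr u a) (fr u b) (fr u z).
Proof.
  intros Hu [Hin [A [c [Hnz [H1 [H2 H3]]]]]].
  split. { unfold in_disc in *. rewrite fr_nrm, Hu. lra. }
  exists A, (fr u c). split.
  { destruct Hnz as [H|H]; [left; exact H| right]. intro E.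
    apply H. apply (fr_inj u); [exact Hu|]. rewrite E. destruct u; unfold fr; simpl; f_equal; ring. }
  change (dot (fr u a) (fr u c) = A /\ dot (fr u b) (fr u c) = A /\
          A * nrm2 (fr u z) - 2 * dot (fr u z) (fr u c) + A = 0).
  rewrite !fr_dot, fr_nrm, Hu, !Rmult_1_l.
  change (dot a c = A) in H1. change (dot b c = A) in H2.
  change (A * nrm2 z - 2 * dot z c + A = 0) in H3. auto.
Qed.

Lemma T_hcirc u xi r z : nrm2 u = 1 -> hcirc xi r z -> hcirc (fr u xi) r (fr u z).
Proof.
  intros Hu [H1 H2]. split.
  - rewrite <- fr_scale, fr_dist, Hu, Rmult_1_l. exact H1.
  - intro E. apply H2. apply (fr_inj u _ _ Hu E).
Qed.

Lemma T_hball u xi r z : nrm2 u = 1 -> (hball xi r z <-> hball (fr u xi) r (fr u z)).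
Proof.
  intros Hu. unfold hball. rewrite <- fr_scale, fr_dist, Hu, Rmult_1_l. tauto.
Qed.

Lemma T_hdist u a b : nrm2 u = 1 -> hdist (fr u a) (fr u b) = hdist a b.
Proof. intros Hu. unfold hdist. rewrite fr_dist, !fr_nrm, Hu, !Rmult_1_l. reflexivity. Qed.

Lemma geod_sym x y z : on_geod x y z -> on_geod y x z.
Proof. intros [Hin [A [c [Hnz [H1 [H2 H3]]]]]]. split; auto. exists A, c. auto. Qed.

Lemma L1id xi r z : nrm2 xi = 1 ->
  (1 - r) * dist2 z xi - dist2 z ((1 - r) * fst xi, (1 - r) * snd xi) = r * (1 - r) - r * nrm2 z.
Proof.
  destruct xi as [a b], z as [z1 z2]; unfold nrm2, dist2; simpl; intro H.
  transitivity (r * (1 - r) - r * (z1*z1+z2*z2) + (a*a+b*b - 1) * r * (1-r)); [ring|].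
  rewrite H; ring.
Qed.

Lemma y1_lt y : nrm2 y = 1 -> y <> (1,0) -> fst y < 1.
Proof. destruct y as [y1 y2]; unfold nrm2; simpl; intros H N.
  destruct (Rlt_or_le y1 1) as [h|h]; auto. exfalso.
  assert (y1 <= 1) by nra. assert (y1 = 1) by lra. subst.
  assert (Hz : y2*y2 = 0) by lra. apply Rsqr_0_uniq in Hz. subst. apply N; reflexivity. Qed.

Lemma geo0 y P : nrm2 y = 1 -> y <> (1,0) -> on_geod (1,0) y P ->
  snd y * dist2 P (1,0) = 2 * snd P * (1 - fst y).
Proof.
  intros Hy Ny [Hin [A [[c1 c2] [Hnz [H1 [H2 H3]]]]]].
  destruct y as [y1 y2], P as [p1 p2]. unfold nrm2, dist2 in *; simpl in *.
  assert (HA : A = c1) by lra. rewrite HA in H2, H3, Hnz. clear H1 HA.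
  destruct (Req_dec c1 0) as [Z|Z].
  - subst c1. assert (Hc : c2 <> 0).
    { intro. subst. destruct Hnz as [h|h]; apply h; reflexivity. }
    assert (Ha : y2 * c2 = 0) by lra. assert (Hb : p2 * c2 = 0) by lra.
    assert (y2 = 0) by (apply Rmult_integral in Ha; tauto).
    assert (p2 = 0) by (apply Rmult_integral in Hb; tauto). subst. ring.
  - apply (Rmult_eq_reg_l c1); auto.
    assert (E1 : c1 * ((p1 - 1) * (p1 - 1) + (p2 - 0) * (p2 - 0)) = 2 * p2 * c2) by lra.
    assert (E2 : c2 * y2 = c1 * (1 - y1)) by lra.
    transitivity (y2 * (c1 * ((p1 - 1) * (p1 - 1) + (p2 - 0) * (p2 - 0)))); [ring|].
    rewrite E1. transitivity (2*p2*(c2*y2)); [ring|]. rewrite E2. ring.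
Qed.

Lemma horo_eq xi r z : nrm2 xi = 1 -> hcirc xi r z -> (1 - r) * dist2 z xi = r * (1 - nrm2 z).
Proof. intros H [H1 _]. pose proof (L1id xi r z H). rewrite H1 in H0. lra. Qed.

Lemma hball_iff xi r z : nrm2 xi = 1 -> (hball xi r z <-> (1 - r) * dist2 z xi < r * (1 - nrm2 z)).
Proof. intros H. pose proof (L1id xi r z H). unfold hball. split; intro; lra. Qed.

Lemma disc_d0 P : in_disc P -> 0 < dist2 P (1,0).
Proof. intro H. destruct (Rle_lt_or_eq_dec 0 _ (dist2_ge0 P (1,0))) as [h|h]; auto.
  apply eq_sym, dist2_eq0 in h. subst. unfold in_disc, nrm2 in H; simpl in H; lra. Qed.

Definition Xc (z : pt) := -2 * snd z / dist2 z (1,0).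
Definition Yc (z : pt) := (1 - nrm2 z) / dist2 z (1,0).

Lemma I1 z w : dist2 z (1,0) <> 0 -> dist2 w (1,0) <> 0 ->
  (Xc z - Xc w)^2 + (Yc z - Yc w)^2 = 4 * dist2 z w / (dist2 z (1,0) * dist2 w (1,0)).
Proof. destruct z as [z1 z2], w as [w1 w2]. unfold Xc, Yc, dist2, nrm2; simpl. intros H1 H2. field. rewrite !Rminus_0_r in *. split; auto. Qed.

Lemma acosh_ge q : 1 <= q -> arcosh ((q + /q)/2) = ln q.
Proof. intro H. unfold arcosh.
  assert (Hq : 0 < q) by lra. assert (/q <= 1).
  { rewrite <- Rinv_1. apply Rinv_le_contravar; lra. }
  replace ((q + / q) / 2 * ((q + / q) / 2) - 1) with (((q - /q)/2) * ((q - /q)/2)) by (field; lra).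
  rewrite sqrt_square by lra. f_equal. field. lra. Qed.

Lemma acosh_lt q : 0 < q < 1 -> arcosh ((q + /q)/2) = - ln q.
Proof. intro H. unfold arcosh.
  assert (1 < /q). { rewrite <- Rinv_1. apply Rinv_lt_contravar; nra. }
  replace ((q + / q) / 2 * ((q + / q) / 2) - 1) with (((/q - q)/2) * ((/q - q)/2)) by (field; lra).
  rewrite sqrt_square by lra. rewrite <- ln_Rinv by lra. f_equal. field. lra. Qed.

Lemma exp_half q : 0 < q -> exp (ln q / 2) = sqrt q.
Proof. intro H. rewrite <- (exp_ln q H) at 2.
  replace (ln q) with (ln q / 2 + ln q / 2) at 2 by field.
  rewrite exp_plus. rewrite sqrt_square; auto. left; apply exp_pos. Qed.

Lemma solve_l a b c : b <> 0 -> a * b = c -> a = c / b.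
Proof. intros H E. subst. field. auto. Qed.

Lemma div_eq a b c d : b <> 0 -> d <> 0 -> a * d = c * b -> a / b = c / d.
Proof. intros Hb Hd E. apply (Rmult_eq_reg_r (b*d)); [|apply Rmult_integral_contrapositive; tauto].
  replace (a/b*(b*d)) with (a*d) by (field; auto). replace (c/d*(b*d)) with (c*b) by (field; auto). exact E. Qed.

Lemma nrm_x0 : nrm2 (1,0) = 1.
Proof. unfold nrm2; simpl; ring. Qed.

Lemma core0 y rx ry P Q L :
 nrm2 y = 1 -> y <> (1,0) -> 0<rx<1 -> 0<ry<1 ->
 on_geod (1,0) y P -> hcirc (1,0) rx P -> on_geod (1,0) y Q -> hcirc y ry Q ->
 (hball y ry P -> L = exp (- hdist P Q / 2)) -> (~ hball y ry P -> L = exp (hdist P Q / 2)) ->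
 L = sqrt ((1-rx)/rx * ((1-ry)/ry) * dist2 (1,0) y / 4).
Proof.
  intros Hy Ny Hrx Hry GP CP GQ CQ L1 L2.
  pose proof (y1_lt y Hy Ny) as Hy1.
  assert (Edy : dist2 y (1,0) = 2 * (1 - fst y)).
  { destruct y as [y1 y2]; unfold dist2, nrm2 in *; simpl in *.
    transitivity ((y1*y1+y2*y2) - 2*y1 + 1); [ring|]. rewrite Hy; ring. }
  assert (Edy' : dist2 (1,0) y = dist2 y (1,0)) by (unfold dist2; ring).
  rewrite Edy'.
  pose proof (disc_d0 P (proj1 GP)) as dP.
  pose proof (disc_d0 Q (proj1 GQ)) as dQ.
  pose proof (proj1 GP) as inP. pose proof (proj1 GQ) as inQ. unfold in_disc in inP, inQ.
  set (X0 := - snd y / (1 - fst y)).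
  assert (XP : Xc P = X0).
  { pose proof (geo0 y P Hy Ny GP) as E. unfold Xc, X0.
    assert (snd P = snd y * dist2 P (1,0) / (2 * (1 - fst y))).
    { apply solve_l; [lra|]. rewrite E. ring. }
    rewrite H. field. lra. }
  assert (XQ : Xc Q = X0).
  { pose proof (geo0 y Q Hy Ny GQ) as E. unfold Xc, X0.
    assert (snd Q = snd y * dist2 Q (1,0) / (2 * (1 - fst y))).
    { apply solve_l; [lra|]. rewrite E. ring. }
    rewrite H. field. lra. }
  assert (Xy : Xc y = X0). { unfold Xc, X0. rewrite Edy. field. lra. }
  assert (Yy : Yc y = 0). { unfold Yc. rewrite Hy. unfold Rdiv. ring. }
  pose proof (horo_eq _ _ _ nrm_x0 CP) as hP.
  pose proof (horo_eq _ _ _ Hy CQ) as hQ.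
  set (u := Yc P). set (v := Yc Q).
  assert (Eu : u = (1 - rx)/rx). { unfold u, Yc. apply div_eq; lra. }
  assert (dy : 0 < dist2 y (1,0)) by (rewrite Edy; lra).
  assert (IPy := I1 P y ltac:(lra) ltac:(lra)). rewrite XP, Xy, Yy in IPy. fold u in IPy.
  assert (IQy := I1 Q y ltac:(lra) ltac:(lra)). rewrite XQ, Xy, Yy in IQy. fold v in IQy.
  assert (IPQ := I1 P Q ltac:(lra) ltac:(lra)). rewrite XP, XQ in IPQ. fold u v in IPQ.
  replace ((X0 - X0)^2) with 0 in IPy, IQy, IPQ by ring.
  rewrite Rplus_0_l, Rminus_0_r in IPy, IQy. rewrite Rplus_0_l in IPQ.
  assert (uP : 1 - nrm2 P = u * dist2 P (1,0)). { unfold u, Yc. field. lra. }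
  assert (vQ : 1 - nrm2 Q = v * dist2 Q (1,0)). { unfold v, Yc. field. lra. }
  assert (vpos : 0 < v). { unfold v, Yc. apply Rdiv_lt_0_compat; lra. }
  assert (upos : 0 < u). { rewrite Eu. apply Rdiv_lt_0_compat; lra. }
  assert (Ev : v = 4 * ry / ((1 - ry) * dist2 y (1,0))).
  { assert (E1 : v * v = 4 * (ry * (1 - nrm2 Q) / (1 - ry)) / (dist2 Q (1,0) * dist2 y (1,0))).
    { replace (ry * (1 - nrm2 Q) / (1 - ry)) with (dist2 Q y).
      - rewrite <- IQy. ring.
      - apply solve_l; lra. }
    rewrite vQ in E1. apply (Rmult_eq_reg_l v); [|lra]. rewrite E1. field. lra. }
  set (q := (1 - rx) / rx * ((1 - ry) / ry) * dist2 y (1, 0) / 4).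
  assert (qpos : 0 < q).
  { unfold q, Rdiv. repeat apply Rmult_lt_0_compat; try apply Rinv_0_lt_compat; lra. }
  assert (Eq : q = u / v). { unfold q. rewrite Eu, Ev. field. lra. }
  assert (Ehd : hdist P Q = arcosh ((q + / q) / 2)).
  { unfold hdist. f_equal.
    assert (dist2 P Q = (u - v)^2 * (dist2 P (1,0) * dist2 Q (1,0)) / 4).
    { rewrite IPQ. field. lra. }
    rewrite H, uP, vQ, Eq. field. lra. }
  assert (key : ry * (1 - nrm2 P) - (1 - ry) * dist2 P y = ry * u * dist2 P (1,0) * (1 - q)).
  { assert (dist2 P y = u ^ 2 * (dist2 P (1,0) * dist2 y (1,0)) / 4).
    { rewrite IPy. field. lra. }
    rewrite H, uP. unfold q. rewrite <- Eu. field. lra. }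
  assert (pos3 : 0 < ry * u * dist2 P (1,0)).
  { apply Rmult_lt_0_compat; [apply Rmult_lt_0_compat|]; lra. }
  pose proof (hball_iff y ry P Hy) as HB.
  destruct (Rlt_le_dec q 1) as [Hq|Hq].
  - rewrite L1.
    + rewrite Ehd, acosh_lt by lra. rewrite <- exp_half by lra. f_equal. field.
    + apply HB. nra.
  - rewrite L2.
    + rewrite Ehd, acosh_ge by lra. apply exp_half; lra.
    + intro Hb. apply HB in Hb. nra.
Qed.

Lemma core x y rx ry P Q L :
 nrm2 x = 1 -> nrm2 y = 1 -> x <> y -> 0<rx<1 -> 0<ry<1 ->
 on_geod x y P -> hcirc x rx P -> on_geod x y Q -> hcirc y ry Q ->
 (hball y ry P -> L = exp (- hdist P Q / 2)) -> (~ hball y ry P -> L = exp (hdist P Q / 2)) ->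
 L = sqrt ((1-rx)/rx * ((1-ry)/ry) * dist2 x y / 4).
Proof.
  intros Hx Hy Nxy Hrx Hry GP CP GQ CQ L1 L2.
  replace (dist2 x y) with (dist2 (fr x x) (fr x y)) by (rewrite fr_dist, Hx; ring).
  rewrite (fr_self x Hx).
  apply (core0 (fr x y) rx ry (fr x P) (fr x Q) L).
  - rewrite fr_nrm, Hx, Hy; ring.
  - rewrite <- (fr_self x Hx). intro E. apply Nxy. symmetry. exact (fr_inj x _ _ Hx E).
  - exact Hrx.
  - exact Hry.
  - pose proof (T_geod x x y P Hx GP) as H. rewrite fr_self in H; auto.
  - pose proof (T_hcirc x x rx P Hx CP) as H. rewrite fr_self in H; auto.
  - pose proof (T_geod x x y Q Hx GQ) as H. rewrite fr_self in H; auto.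
  - exact (T_hcirc x y ry Q Hx CQ).
  - rewrite T_hdist by auto. intro h. apply L1. apply (T_hball x y ry P Hx). exact h.
  - rewrite T_hdist by auto. intro h. apply L2. intro h'. apply h. apply (T_hball x y ry P Hx). exact h'.
Qed.

Lemma exist0 y r : nrm2 y = 1 -> y <> (1,0) -> 0 < r < 1 ->
  exists P, on_geod (1,0) y P /\ hcirc (1,0) r P.
Proof.
  intros Hy Ny Hr. pose proof (y1_lt y Hy Ny) as Hy1.
  destruct y as [y1 y2]. simpl in Hy1.
  set (s := (1 - r) / r).
  assert (spos : 0 < s) by (unfold s; apply Rdiv_lt_0_compat; lra).
  set (X0 := - y2 / (1 - y1)).
  assert (HX : y2 = - (X0 * (1 - y1))) by (unfold X0; field; lra).
  set (N := X0*X0 + (s+1)*(s+1)).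
  assert (Npos : 0 < N).
  { unfold N. pose proof (Rle_0_sqr X0). unfold Rsqr in H. nra. }
  set (P := ((X0*X0 + s*s - 1)/N, -2*X0/N)).
  assert (EnP : nrm2 P = (X0*X0 + (s-1)*(s-1))/N).
  { unfold P, nrm2; simpl. unfold N. field. fold N. lra. }
  assert (EdP : dist2 P (1,0) = 4/N).
  { unfold P, dist2; simpl. unfold N. field. fold N. lra. }
  exists P. split.
  - split.
    { unfold in_disc. rewrite EnP. apply (Rmult_lt_reg_r N); auto.
      unfold Rdiv. rewrite Rmult_assoc, Rinv_l by lra. unfold N. nra. }
    exists y2, (y2, 1 - y1). split.
    { right. intro E. inversion E. lra. }
    simpl. split; [ring|]. split; [ring|].
    rewrite EnP, HX. unfold N. field. fold N. lra.
  - split.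
    + pose proof (L1id (1,0) r P nrm_x0) as E.
      assert (Ed : (1 - r) * dist2 P (1,0) = r * (1 - nrm2 P)).
      { assert (E2 : 1 - nrm2 P = 4 * s / N). { rewrite EnP. unfold N. field. fold N. lra. }
        rewrite EdP, E2. unfold s. field. lra. }
      lra.
    + intro E. rewrite E in EdP. unfold dist2 in EdP; simpl in EdP.
      assert (4 / N > 0) by (apply Rdiv_lt_0_compat; lra). lra.
Qed.

Lemma exist1 x y r : nrm2 x = 1 -> nrm2 y = 1 -> x <> y -> 0 < r < 1 ->
  exists P, on_geod x y P /\ hcirc x r P.
Proof.
  intros Hx Hy Nxy Hr.
  destruct (exist0 (fr x y) r) as [P' [G C]].
  - rewrite fr_nrm, Hx, Hy; ring.
  - rewrite <- (fr_self x Hx). intro E. apply Nxy. symmetry. exact (fr_inj x _ _ Hx E).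
  - exact Hr.
  - assert (Hc : nrm2 (cj x) = 1) by (rewrite cj_nrm; auto).
    exists (fr (cj x) P'). split.
    + pose proof (T_geod _ _ _ _ Hc G) as H. rewrite fr_cj_x0, fr_inv in H; auto.
    + pose proof (T_hcirc _ _ _ _ Hc C) as H. rewrite fr_cj_x0 in H; auto.
Qed.

Lemma lam_exists x y (Hx Hy : pt -> Prop) rx ry :
  nrm2 x = 1 -> nrm2 y = 1 -> x <> y -> 0 < rx < 1 -> 0 < ry < 1 ->
  (forall z, Hx z <-> hcirc x rx z) -> (forall z, Hy z <-> hcirc y ry z) ->
  exists L, lam x Hx y Hy L.
Proof.
  intros nx ny Nxy Hrx Hry EHx EHy.
  destruct (exist1 x y rx nx ny Nxy Hrx) as [P [GP CP]].
  destruct (exist1 y x ry ny nx (not_eq_sym Nxy) Hry) as [Q [GQ CQ]].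
  destruct (Rlt_dec (dist2 P ((1 - ry) * fst y, (1 - ry) * snd y)) (ry * ry)) as [h|h].
  - exists (exp (- hdist P Q / 2)). exists rx, ry, P, Q.
    do 4 (split; [auto|]). split; [exact GP|]. split; [exact CP|].
    split; [exact (geod_sym _ _ _ GQ)|]. split; [exact CQ|].
    split; [auto|]. intro h'. exfalso. apply h'. exact h.
  - exists (exp (hdist P Q / 2)). exists rx, ry, P, Q.
    do 4 (split; [auto|]). split; [exact GP|]. split; [exact CP|].
    split; [exact (geod_sym _ _ _ GQ)|]. split; [exact CQ|].
    split; [|auto]. intro h'. exfalso. apply h. exact h'.
Qed.

Lemma hcirc_pt xi r : nrm2 xi = 1 -> 0 < r -> hcirc xi r ((1 - 2*r) * fst xi, (1 - 2*r) * snd xi).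
Proof.
  destruct xi as [a b]; unfold nrm2, hcirc, dist2; simpl; intros H Hr. split.
  - transitivity (r*r*(a*a+b*b)); [ring|]. rewrite H; ring.
  - intro E. inversion E.
    assert (Ha : r * a = 0) by lra. assert (Hb : r * b = 0) by lra.
    apply Rmult_integral in Ha. apply Rmult_integral in Hb.
    destruct Ha as [|Ha]; [lra|]. destruct Hb as [|Hb]; [lra|]. subst. lra.
Qed.

Lemma rad_pt xi r r' : nrm2 xi = 1 -> 0 < r ->
  hcirc xi r' ((1 - 2*r) * fst xi, (1 - 2*r) * snd xi) -> r = r'.
Proof.
  destruct xi as [a b]; unfold nrm2, hcirc, dist2; simpl; intros H Hr [E _].
  assert (E2 : (r' - 2*r)*(r' - 2*r)*(a*a+b*b) = r' * r') by (rewrite <- E; ring).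
  rewrite H in E2. assert (4 * r * (r - r') = 0) by nra.
  apply Rmult_integral in H0. destruct H0 as [H0|H0]; [|lra].
  apply Rmult_integral in H0. lra.
Qed.

Lemma lam_val x y (Hx Hy : pt -> Prop) r0 r1 L :
  nrm2 x = 1 -> nrm2 y = 1 -> x <> y -> 0 < r0 < 1 -> 0 < r1 < 1 ->
  (forall z, Hx z <-> hcirc x r0 z) -> (forall z, Hy z <-> hcirc y r1 z) ->
  lam x Hx y Hy L -> L = sqrt ((1-r0)/r0 * ((1-r1)/r1) * dist2 x y / 4).
Proof.
  intros nx ny Nxy H0 H1 E0 E1 [rx [ry [P [Q [Hrx [Hry [Ex [Ey [GP [CP [GQ [CQ [L1 L2]]]]]]]]]]]]].
  assert (rx = r0).
  { apply (rad_pt x); [auto|lra|]. apply E0, Ex, hcirc_pt; auto; lra. }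
  assert (ry = r1).
  { apply (rad_pt y); [auto|lra|]. apply E1, Ey, hcirc_pt; auto; lra. }
  subst. apply (core x y r0 r1 P Q L); auto.
Qed.

Lemma nrm_cis a : nrm2 (cis a) = 1.
Proof. unfold nrm2, cis; simpl. pose proof (sin2_cos2 a). unfold Rsqr in H. lra. Qed.

Lemma chord a b : dist2 (cis a) (cis b) = 4 * sin ((a - b)/2) ^ 2.
Proof.
  unfold dist2, cis; simpl.
  pose proof (sin2_cos2 a). pose proof (sin2_cos2 b). unfold Rsqr in *.
  transitivity (2 - 2 * (cos a * cos b + sin a * sin b)).
  { transitivity ((sin a * sin a + cos a * cos a) + (sin b * sin b + cos b * cos b) - 2 * (cos a * cos b + sin a * sin b)); [ring|].
    rewrite H, H0. ring. }
  rewrite <- cos_minus. replace (a - b) with (2 * ((a - b)/2)) at 1 by field.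
  rewrite cos_2a_sin. ring.
Qed.

Lemma chord' a b t : a - b = -(2*t) -> dist2 (cis a) (cis b) = 4 * sin t ^ 2.
Proof. intro E. rewrite chord. replace ((a-b)/2) with (-t) by lra. rewrite sin_neg. ring. Qed.

Lemma rot_cis p a : rot p (cis a) = cis (a + 2*PI/INR p).
Proof. unfold rot, cis; simpl. rewrite cos_plus, sin_plus. f_equal; ring. Qed.

Lemma rot_scale p s a : rot p (s * fst a, s * snd a) = (s * fst (rot p a), s * snd (rot p a)).
Proof. unfold rot; simpl. f_equal; ring. Qed.

Lemma rad_rot p (H : Z -> pt -> Prop) xi0 xi1 r0 r1 :
  nrm2 xi0 = 1 -> nrm2 xi1 = 1 -> 0 < r0 -> rot p xi0 = xi1 ->
  (forall z, H 0%Z z <-> hcirc xi0 r0 z) -> (forall z, H 1%Z z <-> hcirc xi1 r1 z) ->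
  (forall z, H 1%Z z <-> exists u, H 0%Z u /\ z = rot p u) -> r0 = r1.
Proof.
  intros n0 n1 hr R E0 E1 RH.
  set (z0 := ((1 - 2*r0) * fst xi0, (1 - 2*r0) * snd xi0)).
  assert (H0z : H 0%Z z0) by (apply E0, hcirc_pt; auto).
  assert (H1z : H 1%Z (rot p z0)) by (apply RH; exists z0; auto).
  apply E1 in H1z. unfold z0 in H1z. rewrite rot_scale, R in H1z.
  exact (rad_pt xi1 r0 r1 n1 hr H1z).
Qed.

Lemma sq_helper K t : 0 <= K -> 0 <= t -> sqrt (K * (4 * t^2) / 4) = sqrt K * t.
Proof. intros HK Ht.
  replace (K * (4 * t^2) / 4) with ((sqrt K * t) * (sqrt K * t)).
  - apply sqrt_square. apply Rmult_le_pos; auto. apply sqrt_pos.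
  - transitivity (sqrt K * sqrt K * t * t); [ring|]. rewrite sqrt_sqrt by auto. field. Qed.

Lemma neq_of_d x y : 0 < dist2 x y -> x <> y.
Proof. intros H E. subst. unfold dist2 in H. lra. Qed.

Theorem mainTheorem2 (p : nat) (phi : R) (Hv Hw : Z -> pt -> Prop) :
  (2 <= p)%nat ->
  0 < phi < 2 * PI / INR p ->
  (forall m, is_horocycle_at (vpt p m) (Hv m)) ->
  (forall m, is_horocycle_at (wpt p phi m) (Hw m)) ->
  (forall m z, Hv (m + 1)%Z z <-> exists u, Hv m u /\ z = rot p u) ->
  (forall m z, Hw (m + 1)%Z z <-> exists u, Hw m u /\ z = rot p u) ->
  (exists c c' a b,
      lam (vpt p 0) (Hv 0%Z) (vpt p 1) (Hv 1%Z) c /\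
      lam (wpt p phi 0) (Hw 0%Z) (wpt p phi 1) (Hw 1%Z) c' /\
      lam (vpt p 0) (Hv 0%Z) (wpt p phi 0) (Hw 0%Z) a /\
      lam (wpt p phi 0) (Hw 0%Z) (vpt p 1) (Hv 1%Z) b) /\
  (forall c c' a b,
      lam (vpt p 0) (Hv 0%Z) (vpt p 1) (Hv 1%Z) c ->
      lam (wpt p phi 0) (Hw 0%Z) (wpt p phi 1) (Hw 1%Z) c' ->
      lam (vpt p 0) (Hv 0%Z) (wpt p phi 0) (Hw 0%Z) a ->
      lam (wpt p phi 0) (Hw 0%Z) (vpt p 1) (Hv 1%Z) b ->
      c * c' = a ^ 2 + 2 * cos (PI / INR p) * a * b + b ^ 2).
Proof.
  intros Hp Hphi HV HW RV RW.
  assert (Pp : 2 <= INR p) by (replace 2 with (INR 2) by (simpl; ring); apply le_INR; exact Hp).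
  set (th := PI / INR p).
  assert (E2 : 2 * PI / INR p = 2 * th) by (unfold th; field; lra).
  rewrite E2 in Hphi.
  assert (thpos : 0 < th) by (unfold th; apply Rdiv_lt_0_compat; [apply PI_RGT_0|lra]).
  assert (thle : th <= PI / 2).
  { unfold th. unfold Rdiv. apply Rmult_le_compat_l; [left; apply PI_RGT_0|].
    apply Rinv_le_contravar; lra. }
  pose proof PI_RGT_0 as PIpos.
  assert (ev0 : vpt p 0 = cis 0).
  { unfold vpt. f_equal. simpl. unfold Rdiv. ring. }
  assert (ev1 : vpt p 1 = cis (2 * th)).
  { unfold vpt. f_equal. rewrite <- E2. change (IZR 1) with 1. unfold Rdiv. ring. }
  assert (ew0 : wpt p phi 0 = cis phi).
  { unfold wpt. f_equal. simpl. unfold Rdiv. ring. }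
  assert (ew1 : wpt p phi 1 = cis (phi + 2 * th)).
  { unfold wpt. f_equal. rewrite <- E2. change (IZR 1) with 1. unfold Rdiv. ring. }
  destruct (HV 0%Z) as [rv [Hrv Ev0]]. destruct (HV 1%Z) as [rv1 [Hrv1 Ev1]].
  destruct (HW 0%Z) as [rw [Hrw Ew0]]. destruct (HW 1%Z) as [rw1 [Hrw1 Ew1]].
  rewrite ev0 in Ev0. rewrite ev1 in Ev1. rewrite ew0 in Ew0. rewrite ew1 in Ew1.
  assert (rv = rv1).
  { apply (rad_rot p Hv (cis 0) (cis (2*th))); try apply nrm_cis; auto; try lra.
    rewrite rot_cis, E2. f_equal; ring. intro z. exact (RV 0%Z z). }
  assert (rw = rw1).
  { apply (rad_rot p Hw (cis phi) (cis (phi + 2*th))); try apply nrm_cis; auto; try lra.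
    rewrite rot_cis, E2. reflexivity. intro z. exact (RW 0%Z z). }
  subst rv1 rw1.
  rewrite ev0, ev1, ew0, ew1.
  assert (s0 : 0 < sin th) by (apply sin_gt_0; lra).
  assert (s1 : 0 < sin (phi/2)) by (apply sin_gt_0; lra).
  assert (s2 : 0 < sin (th - phi/2)) by (apply sin_gt_0; lra).
  assert (d1 : dist2 (cis 0) (cis (2*th)) = 4 * sin th ^ 2) by (apply chord'; ring).
  assert (d2 : dist2 (cis phi) (cis (phi + 2*th)) = 4 * sin th ^ 2) by (apply chord'; ring).
  assert (d3 : dist2 (cis 0) (cis phi) = 4 * sin (phi/2) ^ 2) by (apply chord'; field).
  assert (d4 : dist2 (cis phi) (cis (2*th)) = 4 * sin (th - phi/2) ^ 2) by (apply chord'; field).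
  assert (n1 : cis 0 <> cis (2*th)) by (apply neq_of_d; rewrite d1; nra).
  assert (n2 : cis phi <> cis (phi + 2*th)) by (apply neq_of_d; rewrite d2; nra).
  assert (n3 : cis 0 <> cis phi) by (apply neq_of_d; rewrite d3; nra).
  assert (n4 : cis phi <> cis (2*th)) by (apply neq_of_d; rewrite d4; nra).
  split.
  - destruct (lam_exists _ _ _ _ rv rv (nrm_cis _) (nrm_cis _) n1 Hrv Hrv Ev0 Ev1) as [c Hc].
    destruct (lam_exists _ _ _ _ rw rw (nrm_cis _) (nrm_cis _) n2 Hrw Hrw Ew0 Ew1) as [c' Hc'].
    destruct (lam_exists _ _ _ _ rv rw (nrm_cis _) (nrm_cis _) n3 Hrv Hrw Ev0 Ew0) as [a Ha].
    destruct (lam_exists _ _ _ _ rw rv (nrm_cis _) (nrm_cis _) n4 Hrw Hrv Ew0 Ev1) as [b Hb].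
    exists c, c', a, b. auto.
  - intros c c' a b Hc Hc' Ha Hb.
    apply (lam_val _ _ _ _ rv rv c (nrm_cis _) (nrm_cis _) n1 Hrv Hrv Ev0 Ev1) in Hc.
    apply (lam_val _ _ _ _ rw rw c' (nrm_cis _) (nrm_cis _) n2 Hrw Hrw Ew0 Ew1) in Hc'.
    apply (lam_val _ _ _ _ rv rw a (nrm_cis _) (nrm_cis _) n3 Hrv Hrw Ev0 Ew0) in Ha.
    apply (lam_val _ _ _ _ rw rv b (nrm_cis _) (nrm_cis _) n4 Hrw Hrv Ew0 Ev1) in Hb.
    rewrite d1 in Hc. rewrite d2 in Hc'. rewrite d3 in Ha. rewrite d4 in Hb.
    set (A := (1 - rv)/rv) in *. set (B := (1 - rw)/rw) in *.
    assert (Ap : 0 < A) by (unfold A; apply Rdiv_lt_0_compat; lra).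
    assert (Bp : 0 < B) by (unfold B; apply Rdiv_lt_0_compat; lra).
    rewrite sq_helper in Hc, Hc', Ha, Hb; try nra.
    rewrite sqrt_square in Hc, Hc' by lra.
    rewrite (Rmult_comm B A) in Hb.
    assert (W : sqrt (A * B) * sqrt (A * B) = A * B) by (apply sqrt_sqrt; nra).
    subst c c' a b.
    rewrite sin_minus.
    pose proof (sin2_cos2 th). pose proof (sin2_cos2 (phi/2)). unfold Rsqr in *.
    set (w := sqrt (A * B)) in *.
    set (S := sin th) in *. set (C := cos th) in *.
    set (S1 := sin (phi/2)) in *. set (C1 := cos (phi/2)) in *.
    transitivity (w * w * S * S + w*w*S1*S1*(1 - (S*S + C*C)) + w*w*S*S*((S1*S1 + C1*C1) - 1)).
    + rewrite H, H0, W. ring.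
    + ring.
Qed.
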